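(* Let $R$ be a tolerance relation on $\{1,\ldots,n\}$ and $A(R)$ its tolerance algebra. The following are equivalent: (i) $A(R)$ is associative; (ii) $A(R)$ is power associative; (iii) $R$ is an equivalence relation.
   Context: A tolerance relation on a set $X$ is a reflexive and symmetric relation $R\subset X\times X$. For $R$ a tolerance relation on $\{1,\ldots,n\}$, the tolerance algebra $A(R)$ is the complex vector space with basis $\{E_{ij}:(i,j)\in R\}$, with bilinear product determined by $E_{ij}\star E_{kl}=\delta_{jk}E_{il}$ if $(i,l)\in R$ and $E_{ij}\star E_{kl}=0$ otherwise (i.e. matrix product followed by setting entries in positions not in $R$ to zero). An algebra is power associative if the subalgebra generated by any single element is associative. *)

(* Defs.v *)
From HB Require Import structures.
From mathcomp Require Import all_boot all_order all_algebra.
From mathcomp Require Import complex.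
From mathcomp Require Import Rstruct.
Set Implicit Arguments. Unset Strict Implicit. Unset Printing Implicit Defensive.
Import Order.TTheory GRing.Theory Num.Theory.
Local Open Scope ring_scope.

Definition CC : Type := complex Stdlib.Reals.Rdefinitions.R.

Definition tolerance (n : nat) (R : rel 'I_n) : Prop := reflexive R /\ symmetric R.

(* The tolerance algebra A(R) is realized as the subspace of n x n complex
   matrices supported on R; the basis E_ij, (i,j) in R, is delta_mx i j. *)
Definition inA (n : nat) (R : rel 'I_n) (x : 'M[CC]_n) : Prop :=
  forall i j, ~~ R i j -> x i j = 0.

Definition maskR (n : nat) (R : rel 'I_n) (x : 'M[CC]_n) : 'M[CC]_n :=
  \matrix_(i, j) (if R i j then x i j else 0).

(* The product: matrix product followed by setting entries outside R to zero.
   On basis elements: E_ij * E_kl = delta_jk E_il if (i,l) in R, else 0. *)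
Definition tstar (n : nat) (R : rel 'I_n) (x y : 'M[CC]_n) : 'M[CC]_n :=
  maskR R (x *m y).

Definition tol_associative (n : nat) (R : rel 'I_n) : Prop :=
  forall x y z, inA R x -> inA R y -> inA R z ->
    tstar R (tstar R x y) z = tstar R x (tstar R y z).

Definition tol_subalgebra (n : nat) (R : rel 'I_n) (S : 'M[CC]_n -> Prop) : Prop :=
  (forall x, S x -> inA R x) /\ S 0 /\
  (forall x y, S x -> S y -> S (x + y)) /\
  (forall (c : CC) x, S x -> S (c *: x)) /\
  (forall x y, S x -> S y -> S (tstar R x y)).

Definition gen_subalg (n : nat) (R : rel 'I_n) (x : 'M[CC]_n) (y : 'M[CC]_n) : Prop :=
  forall S, tol_subalgebra R S -> S x -> S y.

Definition tol_power_associative (n : nat) (R : rel 'I_n) : Prop :=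
  forall x, inA R x ->
    forall a b c, gen_subalg R x a -> gen_subalg R x b -> gen_subalg R x c ->
      tstar R (tstar R a b) c = tstar R a (tstar R b c).

Definition is_equivalence (n : nat) (R : rel 'I_n) : Prop :=
  reflexive R /\ symmetric R /\ transitive R.

(* Main.v *)
Require Import Defs.
From mathcomp Require Import all_boot all_order all_algebra.
From mathcomp Require Import complex Rstruct.
Set Implicit Arguments. Unset Strict Implicit. Unset Printing Implicit Defensive.
Import Order.TTheory GRing.Theory Num.Theory.
Local Open Scope ring_scope.

Section S.
Variables (n : nat) (R : rel 'I_n).

Lemma maskD (A B : 'M[CC]_n) : maskR R (A + B) = maskR R A + maskR R B.
Proof. by apply/matrixP => a b; rewrite !mxE; case: (R a b); rewrite ?addr0. Qed.

Lemma mask0 : maskR R 0 = 0.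
Proof. by apply/matrixP => a b; rewrite !mxE; case: (R a b). Qed.

Lemma mask_delta a b : maskR R (delta_mx a b) = if R a b then delta_mx a b else 0.
Proof.
apply/matrixP => u v; rewrite mxE.
case: (eqVneq u a) => [->|ne]; case: (eqVneq v b) => [->|ne'].
- by case: (R a b); rewrite ?mxE.
- have -> : (delta_mx a b : 'M[CC]_n) a v = 0 by rewrite mxE (negbTE ne') andbF.
  by case: (R a v); case: (R a b); rewrite ?mxE ?(negbTE ne') ?andbF.
- have -> : (delta_mx a b : 'M[CC]_n) u b = 0 by rewrite mxE (negbTE ne).
  by case: (R u b); case: (R a b); rewrite ?mxE ?(negbTE ne).
- have -> : (delta_mx a b : 'M[CC]_n) u v = 0 by rewrite mxE (negbTE ne).
  by case: (R u v); case: (R a b); rewrite ?mxE ?(negbTE ne).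
Qed.

Lemma inA_mask x : inA R (maskR R x).
Proof. by move=> a b /negbTE H; rewrite mxE H. Qed.

Lemma inA_sub : tol_subalgebra R (inA R).
Proof.
split=> //; split; first by move=> a b _; rewrite mxE.
split; first by move=> x y Hx Hy a b H; rewrite mxE Hx // Hy // addr0.
split; first by move=> c x Hx a b H; rewrite mxE Hx // mulr0.
by move=> x y _ _; apply: inA_mask.
Qed.

Lemma mask_id x : inA R x -> maskR R x = x.
Proof.
move=> Hx; apply/matrixP => a b; rewrite mxE.
by case E: (R a b) => //; rewrite Hx // E.
Qed.

End S.

Theorem proposition3p7 (n : nat) (R : rel 'I_n) :
  tolerance R ->
  (tol_associative R <-> tol_power_associative R) /\
  (tol_power_associative R <-> is_equivalence R).
Proof.
move=> [Rr Rs].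
have A2P : tol_associative R -> tol_power_associative R.
  move=> HA x Hx a b c Ha Hb Hc; apply: HA.
  - exact: Ha (inA_sub R) Hx.
  - exact: Hb (inA_sub R) Hx.
  - exact: Hc (inA_sub R) Hx.
have E2A : is_equivalence R -> tol_associative R.
  move=> [_ [_ Rt]] x y z Hx Hy Hz.
  have cl : forall u v, inA R u -> inA R v -> inA R (u *m v).
    move=> u v Hu Hv a b Hab; rewrite mxE big1 // => l _.
    case E1: (R a l); last by rewrite Hu ?E1 // mul0r.
    case E2: (R l b); last by rewrite Hv ?E2 // mulr0.
    by move: Hab; rewrite (Rt _ _ _ E1 E2).
  rewrite /tstar !mask_id ?mulmxA //; apply: (cl) => //; apply: (cl) => //.
have P2E : tol_power_associative R -> is_equivalence R.
  move=> HP; split => //; split => // j i k Hij Hjk.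
  case E: (R i k) => //; exfalso.
  have nij : (i == j) = false.
    by apply/eqP => eij; move: E; rewrite eij Hjk.
  have nji : (j == i) = false by rewrite eq_sym.
  have nik : (i == k) = false.
    by apply/eqP => eik; move: E; rewrite eik Rr.
  have nki : (k == i) = false by rewrite eq_sym.
  have njk : (j == k) = false.
    by apply/eqP => ejk; move: E; rewrite -ejk Hij.
  have nkj : (k == j) = false by rewrite eq_sym.
  have Hji : R j i by rewrite Rs.
  have Eki : R k i = false by rewrite Rs.
  have Rii := Rr i; have Rjj := Rr j.
  pose d (a b : 'I_n) : 'M[CC]_n := delta_mx a b.
  have dA : forall a b, R a b -> inA R (d a b).
    move=> a b Hab u v Huv; rewrite mxE.
    by case: (eqVneq u a) => [eua|//]; case: (eqVneq v b) => [evb|//];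
       move: Huv; rewrite eua evb Hab.
  have [_ [_ [Hadd _]]] := inA_sub R.
  pose x := d i j + d j k + d j i.
  have Hx : inA R x by rewrite /x; apply: (Hadd); [apply: (Hadd)|]; apply: (dA).
  have gx : gen_subalg R x x by move=> S _.
  have := HP x Hx x x x gx gx gx.
  rewrite /tstar /x /d !(mulmxDl, mulmxDr) !mul_delta_mx_cond
     ?eqxx ?nij ?nji ?nik ?nki ?njk ?nkj ?mulr0n ?mulr1n ?addr0 ?add0r.
  rewrite !maskD ?mask0 !mask_delta ?Rii ?Rjj ?Hij ?Hji ?Hjk ?E ?Eki ?addr0 ?add0r.
  rewrite !(mulmxDl, mulmxDr) !mul_delta_mx_cond
     ?eqxx ?nij ?nji ?nik ?nki ?njk ?nkj ?mulr0n ?mulr1n ?addr0 ?add0r.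
  rewrite !mask_delta Hij Hjk Hji mask0 addr0.
  move/matrixP/(_ j k); rewrite !mxE !eqxx ?nji ?njk ?nkj ?nij /=.
  by rewrite nki !add0r addr0; move/eqP; rewrite oner_eq0.
split; split.
- exact: A2P.
- by move=> HP; exact: (E2A (P2E HP)).
- exact: P2E.
- by move=> HE; exact: (A2P (E2A HE)).
Qed.
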